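(* Let $(\mathfrak g,[\cdot,\cdot]_{\mathfrak g},E)$ be an ENL algebra, $(W;T,\rho)$ an ENE-representation of it, and $K:W\to\mathfrak g$ an ENE-relative Rota–Baxter operator with respect to $(W;T,\rho)$. Then $(W,\{\cdot,\cdot\}_K,T)$ is a pre-ENL algebra, where $\{u,v\}_K=\rho(Ku)v$ for $u,v\in W$.
   Context: Vector spaces are finite-dimensional over an algebraically closed field of characteristic zero. An ENL algebra is a Lie algebra with linear $E$ satisfying $E[x,y]=[x,Ey]$ for all $x,y$. An ENE-representation $(W;T,\rho)$ is a representation $\rho:\mathfrak g\to\mathfrak{gl}(W)$ with linear $T$ such that $T(\rho(x)u)=\rho(Ex)u=\rho(x)(Tu)$. An ENE-relative Rota–Baxter operator is a linear $K:W\to\mathfrak g$ with $[Ku,Kv]_{\mathfrak g}=K(\rho(Ku)v-\rho(Kv)u)$ for all $u,v\in W$ and $E\circ K=K\circ T$. A pre-Lie algebra is a vector space with bilinear product $\{\cdot,\cdot\}$ satisfying $\{\{x,y\},z\}-\{x,\{y,z\}\}=\{\{y,x\},z\}-\{y,\{x,z\}\}$; a pre-ENL algebra $(A,\{\cdot,\cdot\},T)$ is a pre-Lie algebra with linear $T$ such that $T\{u,v\}=\{Tu,v\}=\{u,Tv\}$ for all $u,v$. *)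

(* Defs.v *)
From HB Require Import structures.
From mathcomp Require Import all_boot all_order all_algebra.
Set Implicit Arguments. Unset Strict Implicit. Unset Printing Implicit Defensive.
Import GRing.Theory.
Local Open Scope ring_scope.

Definition is_lie_bracket (F : fieldType) (g : vectType F) (br : g -> g -> g) :=
  [/\ (forall x, linear (br x)),
      (forall y, linear (br^~ y)),
      (forall x, br x x = 0) &
      (forall x y z, br x (br y z) + br y (br z x) + br z (br x y) = 0)].

Definition is_ENL (F : fieldType) (g : vectType F) (br : g -> g -> g) (E : g -> g) :=
  [/\ is_lie_bracket br, linear E & forall x y, E (br x y) = br x (E y)].

Definition is_rep (F : fieldType) (g W : vectType F) (br : g -> g -> g)
  (rho : g -> W -> W) :=
  [/\ (forall x, linear (rho x)),
      (forall u, linear (rho^~ u)) &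
      (forall x y u, rho (br x y) u = rho x (rho y u) - rho y (rho x u))].

Definition is_ENE_rep (F : fieldType) (g W : vectType F) (br : g -> g -> g)
  (E : g -> g) (T : W -> W) (rho : g -> W -> W) :=
  [/\ is_rep br rho, linear T &
      forall x u, T (rho x u) = rho (E x) u /\ rho (E x) u = rho x (T u)].

Definition is_ENE_RB (F : fieldType) (g W : vectType F) (br : g -> g -> g)
  (E : g -> g) (T : W -> W) (rho : g -> W -> W) (K : W -> g) :=
  [/\ linear K,
      (forall u v, br (K u) (K v) = K (rho (K u) v - rho (K v) u)) &
      (forall u, E (K u) = K (T u))].

Definition is_preLie (F : fieldType) (A : vectType F) (pr : A -> A -> A) :=
  [/\ (forall x, linear (pr x)),
      (forall y, linear (pr^~ y)) &
      (forall x y z, pr (pr x y) z - pr x (pr y z) = pr (pr y x) z - pr y (pr x z))].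

Definition is_preENL (F : fieldType) (A : vectType F) (pr : A -> A -> A) (T : A -> A) :=
  [/\ is_preLie pr, linear T &
      forall u v, T (pr u v) = pr (T u) v /\ pr (T u) v = pr u (T v)].

Definition prod_K (F : fieldType) (g W : vectType F) (rho : g -> W -> W) (K : W -> g) :=
  fun u v : W => rho (K u) v.

(* Main.v *)
Require Import Defs.
From mathcomp Require Import all_boot all_order all_algebra.
Import GRing.Theory.
Local Open Scope ring_scope.

Lemma linB_aux (F : fieldType) (U V : lmodType F) (f : U -> V) :
  linear f -> forall x y, f (x - y) = f x - f y.
Proof.
move=> hf x y.
have -> : x - y = (-1) *: y + x by rewrite scaleN1r addrC.
by rewrite hf scaleN1r addrC.
Qed.

Theorem proposition7p5 (F : closedFieldType) (hF : [pchar F]%R =i pred0)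
  (g W : vectType F) (br : g -> g -> g) (E : g -> g)
  (T : W -> W) (rho : g -> W -> W) (K : W -> g) :
  is_ENL br E -> is_ENE_rep br E T rho -> is_ENE_RB br E T rho K ->
  is_preENL (prod_K rho K) T.
Proof.
move=> [_ _ _] [[hrl hrr hrb] hT hTE] [hK hKb hKE].
split=> //; last first.
  move=> u v; rewrite /prod_K; have [h1 h2] := hTE (K u) v.
  by rewrite h1 hKE -hKE.
split.
- by move=> x; rewrite /prod_K; apply: hrl.
- move=> y a u v; rewrite /prod_K hK; exact: hrr.
- move=> x y z; rewrite /prod_K.
  apply/eqP; rewrite subr_eq addrAC -addrA -hrb hKb.
  rewrite (@linB_aux _ _ _ K hK) (@linB_aux _ _ _ _ (hrr z)).
  by rewrite addrC subrK.
Qed.
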